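(* Let $R$ be a ring and let $m$ and $n$ be positive integers. (1) A proper ideal $I$ of $R$ is weakly $n$-absorbing if and only if for every integer $m>n$ and all $x_1,\dots,x_m\in R$ with $0\neq x_1\cdots x_m\in I$, there are $n$ of the $x_i$'s whose product is in $I$. (2) If $I$ is a weakly $n$-absorbing ideal of $R$, then $I$ is a weakly $m$-absorbing ideal of $R$ for all $m\geq n$. (3) If $k\geq1$ and, for each $1\leq i\leq k$, $I_i$ is a weakly $n_i$-absorbing ideal of $R$ (with $n_i$ positive integers), then $I_1\cap\cdots\cap I_k$ is a weakly $n$-absorbing ideal of $R$ for $n=n_1+\cdots+n_k$. In particular, if $P_1,\dots,P_n$ are weakly prime ideals of $R$, then $P_1\cap\cdots\cap P_n$ is a weakly $n$-absorbing ideal of $R$. (4) If $P_1,\dots,P_n$ are weakly prime ideals of $R$ that are pairwise comaximal, then $P_1\cdots P_n$ is a weakly $n$-absorbing ideal of $R$.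
   Context: All rings are commutative with $1\neq0$. A proper ideal $I$ of $R$ is weakly $n$-absorbing if whenever $0\neq a_1\cdots a_{n+1}\in I$ with $a_1,\dots,a_{n+1}\in R$, there are $n$ of the $a_i$'s whose product is in $I$. A proper ideal $P$ is weakly prime if whenever $a,b\in R$ and $0\neq ab\in P$, then $a\in P$ or $b\in P$. *)

(* Defs.v *)
From mathcomp Require Import all_boot all_order all_algebra.
Set Implicit Arguments. Unset Strict Implicit. Unset Printing Implicit Defensive.
Import GRing.Theory.
Local Open Scope ring_scope.

Section Ideals.
Variable R : comNzRingType.

Definition is_ideal_p (I : R -> Prop) : Prop :=
  [/\ I 0, (forall x y, I x -> I y -> I (x + y)), (forall x, I x -> I (- x))
    & (forall r x, I x -> I (r * x))].

Definition proper_ideal_p (I : R -> Prop) : Prop := is_ideal_p I /\ ~ I 1.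

Definition weakly_n_absorbing (n : nat) (I : R -> Prop) : Prop :=
  proper_ideal_p I /\
  forall a : 'I_n.+1 -> R,
    \prod_(i < n.+1) a i != 0 -> I (\prod_(i < n.+1) a i) ->
    exists j : 'I_n.+1, I (\prod_(i < n.+1 | i != j) a i).

Definition weakly_prime (P : R -> Prop) : Prop :=
  proper_ideal_p P /\
  forall a b : R, a * b != 0 -> P (a * b) -> P a \/ P b.

Definition ideal_cap (k : nat) (I : 'I_k -> R -> Prop) : R -> Prop :=
  fun x => forall i, I i x.

Definition ideal_prod (k : nat) (I : 'I_k -> R -> Prop) : R -> Prop :=
  fun x => exists (s : nat) (f : 'I_s -> 'I_k -> R),
    (forall j i, I i (f j i)) /\ x = \sum_(j < s) \prod_(i < k) f j i.

Definition comaximal (I J : R -> Prop) : Prop :=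
  exists a b, I a /\ J b /\ a + b = 1.

End Ideals.

(* Main.v *)
Require Import Defs.
From mathcomp Require Import all_boot all_order all_algebra.
From mathcomp Require Import zify ring.
From Stdlib Require Import IndefiniteDescription FunctionalExtensionality PropExtensionality.
Import GRing.Theory.
Local Open Scope ring_scope.
Set Implicit Arguments. Unset Strict Implicit.

Lemma idealMl (R : comNzRingType) (I : R -> Prop) r x :
  is_ideal_p I -> I x -> I (r * x).
Proof. by case=> _ _ _ H; apply: H. Qed.

Lemma idealMr (R : comNzRingType) (I : R -> Prop) r x :
  is_ideal_p I -> I x -> I (x * r).
Proof. by rewrite mulrC; apply: idealMl. Qed.

Lemma prod_sub (R : comNzRingType) (I : R -> Prop) (T : finType) (x : T -> R)
  (S B : {set T}) :
  is_ideal_p I -> S \subset B -> I (\prod_(i in S) x i) -> I (\prod_(i in B) x i).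
Proof. by move=> hI sSB h; rewrite (big_setID S) /= (setIidPr sSB); exact: idealMr. Qed.

Lemma prod_sub_neq0 (R : comNzRingType) (T : finType) (x : T -> R) (S B : {set T}) :
  S \subset B -> \prod_(i in B) x i != 0 -> \prod_(i in S) x i != 0.
Proof.
move=> sSB; rewrite (big_setID S) /= (setIidPr sSB).
by apply: contra => /eqP ->; rewrite mul0r.
Qed.

Lemma prod_D1 (R : comNzRingType) (T : finType) (x : T -> R) (A : {set T}) j :
  j \in A -> \prod_(i in A) x i = x j * \prod_(i in A :\ j) x i.
Proof.
move=> hj; rewrite (bigD1 j) //=; congr (_ * _); apply: eq_bigl => i.
by rewrite !inE andbC.
Qed.

Lemma setD1C (T : finType) (A : {set T}) a b : A :\ a :\ b = A :\ b :\ a.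
Proof. by rewrite !setDDl setUC. Qed.

Lemma wn_set (R : comNzRingType) n (I : R -> Prop) (T : finType) (x : T -> R)
  (D : {set T}) :
  weakly_n_absorbing n I -> #|D| = n.+1 ->
  \prod_(i in D) x i != 0 -> I (\prod_(i in D) x i) ->
  exists2 j, j \in D & I (\prod_(i in D :\ j) x i).
Proof.
move=> [_ hw] hD.
have key : forall N (e : 'I_N -> T), N = n.+1 ->
   \prod_(i < N) x (e i) != 0 -> I (\prod_(i < N) x (e i)) ->
   exists j : 'I_N, I (\prod_(i < N | i != j) x (e i)).
  by move=> N e hN; subst N; exact: (hw (fun i => x (e i))).
rewrite (big_enum_val (A := mem D)) => h0 h1.
have [j hj] := key _ _ hD h0 h1.
exists (enum_val j); first exact: enum_valP.
rewrite (eq_bigl (fun i => (i \in D) && (i != enum_val j))); last first.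
  by move=> i; rewrite !inE andbC.
rewrite (big_enum_val_cond (A := mem D)).
rewrite (eq_bigl (fun i => i != j)) // => i /=.
by rewrite (inj_eq enum_val_inj).
Qed.

Lemma wn_remove (R : comNzRingType) n (I : R -> Prop) (T : finType) :
  weakly_n_absorbing n I ->
  forall m (x : T -> R) (A : {set T}), #|A| = m -> (n < m)%N ->
  \prod_(i in A) x i != 0 -> I (\prod_(i in A) x i) ->
  exists2 j, j \in A & I (\prod_(i in A :\ j) x i).
Proof.
move=> hW; have hI : is_ideal_p I by case: hW => [[]].
elim=> [//|m IH] x A hA hnm h0 h1.
case: (ltnP n m) => hnm'; last first.
  have hA' : #|A| = n.+1 by lia.
  exact: wn_set hW hA' h0 h1.
have : (0 < #|A|)%N by rewrite hA.
case/card_gt0P => a ha.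
have : (0 < #|A :\ a|)%N.
  move: (cardsD1 a A); rewrite ha hA /= => E; lia.
case/card_gt0P => b; rewrite !inE => /andP [hba hb].
pose y := fun t => if t == a then x a * x b else x t.
have hab : a \in A :\ b by rewrite !inE eq_sym hba.
have Ey : forall B : {set T}, a \notin B -> \prod_(i in B) y i = \prod_(i in B) x i.
  move=> B hB; apply: eq_bigr => i iB; rewrite /y; case: eqP => // ia.
  by rewrite -ia iB in hB.
have hP : \prod_(i in A :\ b) y i = \prod_(i in A) x i.
  rewrite (prod_D1 _ hab) Ey; last by rewrite !inE eqxx.
  rewrite (prod_D1 _ hb) (prod_D1 _ (A := A :\ b) hab) setD1C /y eqxx.
  by rewrite mulrA (mulrC (x b)).
have hcard : #|A :\ b| = m by move: (cardsD1 b A); rewrite hb hA /=; lia.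
have hP0 : \prod_(i in A :\ b) y i != 0 by rewrite hP.
have hP1 : I (\prod_(i in A :\ b) y i) by rewrite hP.
have [c hc hI'] := IH y (A :\ b) hcard hnm' hP0 hP1.
case: (eqVneq c a) => [ca|ca].
  subst c; exists a => //.
  rewrite Ey in hI'; last by rewrite !inE eqxx.
  have hb' : b \in A :\ a by rewrite !inE hba hb.
  by rewrite (prod_D1 _ hb') setD1C; exact: idealMl.
move: hc; rewrite !inE => /andP [cb cA]; exists c => //.
have ha' : a \in A :\ b :\ c by rewrite !inE eq_sym ca eq_sym hba.
rewrite (prod_D1 _ ha') Ey in hI'; last by rewrite !inE eqxx.
have hb' : b \in A :\ c by rewrite !inE eq_sym cb hb.
have ha'' : a \in A :\ c :\ b by rewrite !inE eq_sym hba eq_sym ca.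
rewrite (prod_D1 _ hb') (prod_D1 _ ha'').
have -> : A :\ c :\ b :\ a = A :\ b :\ c :\ a by rewrite (setD1C A c b).
move: hI'; rewrite /y eqxx => hI'.
by rewrite mulrA (mulrC (x b)); exact: hI'.
Qed.

Lemma wn_subset (R : comNzRingType) n (I : R -> Prop) (T : finType) (x : T -> R) :
  weakly_n_absorbing n I ->
  forall k (A : {set T}), #|A| = (n + k)%N ->
  \prod_(i in A) x i != 0 -> I (\prod_(i in A) x i) ->
  exists S : {set T}, [/\ S \subset A, #|S| = n & I (\prod_(i in S) x i)].
Proof.
move=> hW; elim=> [|k IH] A hA h0 h1.
  by exists A; rewrite hA addn0.
have hlt : (n < n + k.+1)%N by lia.
have [j hj hI] := wn_remove hW hA hlt h0 h1.
have hc : #|A :\ j| = (n + k)%N by move: (cardsD1 j A); rewrite hj hA /=; lia.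
have [S [sS cS iS]] := IH _ hc (prod_sub_neq0 (subD1set A j) h0) hI.
by exists S; split => //; apply: subset_trans sS (subD1set A j).
Qed.

Lemma pick_out (R : comNzRingType) (I : R -> Prop) m (a : 'I_m.+1 -> R)
  (S : {set 'I_m.+1}) : is_ideal_p I -> (#|S| <= m)%N ->
  I (\prod_(i in S) a i) -> exists j, I (\prod_(i < m.+1 | i != j) a i).
Proof.
move=> hI hS h.
have : (0 < #|~: S|)%N by have := cardsC S; rewrite card_ord; lia.
case/card_gt0P => j; rewrite inE => hj; exists j.
rewrite (eq_bigl (fun i => i \in [set i | i != j])); last by move=> i; rewrite inE.
apply: prod_sub hI _ h; apply/subsetP => i iS; rewrite inE.
by apply/eqP => ij; rewrite -ij iS in hj.
Qed.

Lemma part1 (R : comNzRingType) (n : nat) (I : R -> Prop) : proper_ideal_p I ->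
     (weakly_n_absorbing n I <->
      forall (m : nat), (n < m)%N -> forall x : 'I_m -> R,
        \prod_(i < m) x i != 0 -> I (\prod_(i < m) x i) ->
        exists S : {set 'I_m}, #|S| = n /\ I (\prod_(i in S) x i)).
Proof.
move=> hP; split.
  move=> hW m hm x h0 h1.
  have E : \prod_(i in [set: 'I_m]) x i = \prod_(i < m) x i.
    by apply: eq_bigl => i; rewrite inE.
  have hc : #|[set: 'I_m]| = (n + (m - n))%N by rewrite cardsT card_ord; lia.
  rewrite -E in h0 h1.
  have [S [_ cS iS]] := wn_subset hW hc h0 h1.
  by exists S.
move=> H; split=> // a h0 h1.
have [S [cS iS]] := H n.+1 (ltnSn n) a h0 h1.
by apply: pick_out (proj1 hP) _ iS; rewrite cS.
Qed.

Lemma part2 (R : comNzRingType) (n : nat) (I : R -> Prop) :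
  weakly_n_absorbing n I -> forall m : nat, (n <= m)%N -> weakly_n_absorbing m I.
Proof.
move=> hW m hnm; have hP := proj1 hW.
have H := (proj1 (part1 n hP) hW).
split=> // a h0 h1.
have hlt : (n < m.+1)%N by lia.
have [S [cS iS]] := H m.+1 hlt a h0 h1.
by apply: pick_out (proj1 hP) _ iS; rewrite cS.
Qed.

Lemma cap_ideal (R : comNzRingType) k (I : 'I_k -> R -> Prop) :
  (forall i, is_ideal_p (I i)) -> is_ideal_p (ideal_cap I).
Proof.
move=> h; split.
- by move=> i; case: (h i).
- by move=> x y hx hy i; case: (h i) => _ H _ _; apply: H.
- by move=> x hx i; case: (h i) => _ _ H _; apply: H.
- by move=> r x hx i; case: (h i) => _ _ _ H; apply: H.
Qed.

Lemma card_bigcup_le (T : finType) k (S : 'I_k -> {set T}) :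
  (#|\bigcup_(i < k) S i| <= \sum_(i < k) #|S i|)%N.
Proof.
apply: (big_ind2 (fun (A : {set T}) (n : nat) => #|A| <= n)%N).
- by rewrite cards0.
- move=> A1 n1 A2 n2 h1 h2; apply: leq_trans (leq_card_setU A1 A2) _.
  exact: leq_add.
- by [].
Qed.

Lemma part3 (R : comNzRingType) (k : nat) (I : 'I_k -> R -> Prop) (ns : 'I_k -> nat) :
  (1 <= k)%N ->
  (forall i, weakly_n_absorbing (ns i) (I i)) ->
  weakly_n_absorbing (\sum_(i < k) ns i)%N (ideal_cap I).
Proof.
move=> hk hW.
have hid : forall i, is_ideal_p (I i) by move=> i; case: (hW i) => [[]].
split.
  split; first exact: cap_ideal.
  move=> h; case: (hW (Ordinal hk)) => [[_ H] _]; exact: H.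
set N := (\sum_(i < k) ns i)%N => a h0 h1.
have E : \prod_(i in [set: 'I_N.+1]) a i = \prod_(i < N.+1) a i.
  by apply: eq_bigl => i; rewrite inE.
rewrite -E in h0 h1.
have ex : forall i, exists S : {set 'I_N.+1}, #|S| = ns i /\ I i (\prod_(j in S) a j).
  move=> i.
  have hle : (ns i <= N)%N by rewrite /N (bigD1 i) //= leq_addr.
  have hc : #|[set: 'I_N.+1]| = (ns i + (N.+1 - ns i))%N by rewrite cardsT card_ord; lia.
  have [S [_ cS iS]] := wn_subset (hW i) hc h0 (h1 i).
  by exists S.
pose S i := proj1_sig (constructive_indefinite_description _ (ex i)).
have hS : forall i, #|S i| = ns i /\ I i (\prod_(j in S i) a j).
  by move=> i; rewrite /S; case: (constructive_indefinite_description _ _).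
apply: (@pick_out _ _ N a (\bigcup_(i < k) S i) (cap_ideal hid)).
  apply: leq_trans (card_bigcup_le S) _.
  by rewrite /N; apply: leq_sum => i _; rewrite (proj1 (hS i)).
move=> i; apply: prod_sub (hid i) _ (proj2 (hS i)).
exact: (bigcup_sup i (P := fun _ => true)).
Qed.

Lemma wp_w1 (R : comNzRingType) (P : R -> Prop) : weakly_prime P -> weakly_n_absorbing 1 P.
Proof.
case=> hp hw; split=> // a.
rewrite big_ord_recl big_ord1 => h0 h1.
case: (hw _ _ h0 h1) => h.
  exists (lift ord0 ord0).
  rewrite big_mkcond big_ord_recl big_ord1 /=.
  by rewrite mulr1.
exists ord0.
rewrite big_mkcond big_ord_recl big_ord1 /=.
by rewrite mul1r.
Qed.

Lemma part3b (R : comNzRingType) (n : nat) (P : 'I_n -> R -> Prop) : (0 < n)%N ->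
     (forall i, weakly_prime (P i)) ->
     weakly_n_absorbing n (ideal_cap P).
Proof.
move=> hn hP.
suff: weakly_n_absorbing (\sum_(i < n) 1)%N (ideal_cap P).
  by rewrite sum1_card card_ord.
by apply: part3 => // i; apply: wp_w1.
Qed.

Lemma prod_add (R : comNzRingType) k (P : 'I_k -> R -> Prop) y z :
  ideal_prod P y -> ideal_prod P z -> ideal_prod P (y + z).
Proof.
move=> [s1 [f1 [h1 ->]]] [s2 [f2 [h2 ->]]].
exists (s1 + s2)%N, (fun j => match split j with inl j1 => f1 j1 | inr j2 => f2 j2 end).
split.
  by move=> j i; case: (split j).
rewrite big_split_ord /=; congr (_ + _); apply: eq_bigr => j _.
  by rewrite (unsplitK (inl j : 'I_s1 + 'I_s2)).
by rewrite (unsplitK (inr j : 'I_s1 + 'I_s2)).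
Qed.

Lemma prod_mul_last (R : comNzRingType) n (P : 'I_n.+1 -> R -> Prop) y z :
  ideal_prod (fun i : 'I_n => P (widen_ord (leqnSn n) i)) y -> P ord_max z ->
  ideal_prod P (y * z).
Proof.
move=> [s [f [hf ->]]] hz.
have lw : forall i : 'I_n, lift ord_max i = widen_ord (leqnSn n) i.
  by move=> i; apply: val_inj; exact: lift_max.
exists s, (fun j i => if unlift ord_max i is Some i' then f j i' else z); split.
  move=> j i; case: unliftP => [i' ->|->] //.
  by rewrite lw; exact: hf.
rewrite big_distrl /=; apply: eq_bigr => j _.
rewrite big_ord_recr /= unlift_none; congr (_ * _); apply: eq_bigr => i _.
by rewrite -lw liftK.
Qed.

Lemma prod_in_cap (R : comNzRingType) k (P : 'I_k -> R -> Prop) x :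
  (forall i, is_ideal_p (P i)) -> ideal_prod P x -> ideal_cap P x.
Proof.
move=> hid [s [f [hf ->]]] i0.
case: (hid i0) => h0 hadd _ _.
apply: big_ind => // j _.
rewrite (bigD1 i0) //=; apply: idealMr => //.
Qed.

Lemma comax_prod (R : comNzRingType) n (J : R -> Prop) (Q : 'I_n -> R -> Prop) :
  is_ideal_p J -> (forall i, comaximal J (Q i)) ->
  exists a b, J a /\ ideal_prod Q b /\ a + b = 1.
Proof.
move=> hJ hc.
have ex : forall i, exists b, Q i b /\ J (1 - b).
  move=> i; have [a [b [ha [hb hab]]]] := hc i.
  exists b; split => //; have -> : 1 - b = a by rewrite -hab; ring.
  exact: ha.
pose bf i := proj1_sig (constructive_indefinite_description _ (ex i)).
have hb : forall i, Q i (bf i) /\ J (1 - bf i).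
  by move=> i; rewrite /bf; case: (constructive_indefinite_description _ _).
exists (1 - \prod_(i < n) bf i), (\prod_(i < n) bf i); split; last first.
  split; last by ring.
  exists 1%N, (fun _ i => bf i); split; first by move=> _ i; exact: (proj1 (hb i)).
  by rewrite big_ord1.
case: hJ => J0 Jadd _ Jmul.
apply: (big_rec (fun y => J (1 - y))); first by rewrite subrr.
move=> i y _ hy.
have -> : 1 - bf i * y = (1 - bf i) + bf i * (1 - y) by ring.
apply: Jadd; first exact: (proj2 (hb i)).
exact: Jmul.
Qed.

Lemma cap_in_prod (R : comNzRingType) n : forall (P : 'I_n.+1 -> R -> Prop),
  (forall i, is_ideal_p (P i)) ->
  (forall i j, i != j -> comaximal (P i) (P j)) ->
  forall x, ideal_cap P x -> ideal_prod P x.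
Proof.
elim: n => [|n IH] P hid hc x hx.
  exists 1%N, (fun _ _ => x); split; first by move=> _ i; exact: hx.
  by rewrite !big_ord1.
pose Q := fun i : 'I_n.+1 => P (widen_ord (leqnSn n.+1) i).
have hQid : forall i, is_ideal_p (Q i) by move=> i; exact: hid.
have hQc : forall i j, i != j -> comaximal (Q i) (Q j).
  move=> i j ij; apply: hc; apply: contra ij => /eqP h.
  by apply/eqP; apply: val_inj; move: (congr1 val h).
have hxQ : ideal_prod Q x by apply: IH => // i; exact: hx.
have hc' : forall i, comaximal (P ord_max) (Q i).
  move=> i; apply: hc; apply/eqP => /(congr1 val) /= h.
  by move: (ltn_ord i); rewrite -h ltnn.
have [a [b [ha [hb hab]]]] := comax_prod (hid ord_max) hc'.
have -> : x = x * a + b * x by rewrite (mulrC b) -mulrDr hab mulr1.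
apply: prod_add; first exact: prod_mul_last.
exact: prod_mul_last hb (hx ord_max).
Qed.
Theorem mainTheorem11 (R : comNzRingType) :
  (* (1) *)
  (forall (n : nat) (I : R -> Prop), (0 < n)%N -> proper_ideal_p I ->
     (weakly_n_absorbing n I <->
      forall (m : nat), (n < m)%N -> forall x : 'I_m -> R,
        \prod_(i < m) x i != 0 -> I (\prod_(i < m) x i) ->
        exists S : {set 'I_m}, #|S| = n /\ I (\prod_(i in S) x i)))
  /\
  (* (2) *)
  (forall (n : nat) (I : R -> Prop), (0 < n)%N -> weakly_n_absorbing n I ->
     forall m : nat, (n <= m)%N -> weakly_n_absorbing m I)
  /\
  (* (3) *)
  (forall (k : nat) (I : 'I_k -> R -> Prop) (ns : 'I_k -> nat), (1 <= k)%N ->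
     (forall i, (0 < ns i)%N) ->
     (forall i, weakly_n_absorbing (ns i) (I i)) ->
     weakly_n_absorbing (\sum_(i < k) ns i)%N (ideal_cap I))
  /\
  (* (3), in particular *)
  (forall (n : nat) (P : 'I_n -> R -> Prop), (0 < n)%N ->
     (forall i, weakly_prime (P i)) ->
     weakly_n_absorbing n (ideal_cap P))
  /\
  (* (4) *)
  (forall (n : nat) (P : 'I_n -> R -> Prop), (0 < n)%N ->
     (forall i, weakly_prime (P i)) ->
     (forall i j, i != j -> comaximal (P i) (P j)) ->
     weakly_n_absorbing n (ideal_prod P)).
Proof.
split; first by move=> n I _ hP; exact: part1.
split; first by move=> n I _ hW m hm; exact: part2 hW m hm.
split; first by move=> k I ns hk _ hW; exact: part3.
split; first by move=> n P hn hP; exact: part3b.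
move=> n P hn hP hc.
have hid : forall i, is_ideal_p (P i) by move=> i; case: (hP i) => [[]].
have E : ideal_prod P = ideal_cap P.
  apply: functional_extensionality => x; apply: propositional_extensionality.
  split; first exact: prod_in_cap.
  case: n hn P hP hc hid => // n _ P hP hc hid; exact: cap_in_prod.
by rewrite E; exact: part3b.
Qed.
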